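(* Let $p\ge2$ be an integer, $\mathcal{F}$ the infinite rooted tree with root $\delta$ in which every vertex has exactly $p$ children, and let $a,b$ be integral weight functions on $\mathcal{F}$ with weights $\omega_a,\omega_b$ respectively. Then $$\langle a,b\rangle\ \ge\ \sum_{i=0}^{\infty}p^i\,\widehat\gamma_i(\omega_a)\,\widehat\gamma_i(\omega_b).$$
   Context: An integral weight function with weight $\omega$ (a nonnegative integer) is a map $a:V(\mathcal{F})\to\mathbb{Z}_{\ge0}$ such that (1) for every infinite path $T$ starting at the root, $\sum_{v\in T}a(v)\ge\omega$; (2) for every vertex $v$, $a(v)\ge\sum_{u\in N_v}a(u)$, where $N_v$ is the set of children of $v$. The scalar product is $\langle a,b\rangle=\sum_{v}a(v)b(v)\in[0,\infty]$. An integral resolution of $\omega$ is a sequence $(\gamma_i)_{i\ge0}$ of nonnegative integers with $\gamma_i\ge p\gamma_{i+1}$ and $\sum_i\gamma_i=\omega$; $(\widehat\gamma_i(\omega))_{i\ge0}$ denotes the lexicographically smallest one. *)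

(* Defs.v *)
From mathcomp Require Import all_boot.
Set Implicit Arguments. Unset Strict Implicit. Unset Printing Implicit Defensive.

(* The p-ary tree F: vertices are finite words over 'I_p, the root delta is
   the empty word [::], and the children of v are the words rcons v i. *)
Definition vertex (p : nat) := seq 'I_p.

(* An infinite path from the root is given by an infinite sequence of
   choices f; its vertices are the prefixes mkseq f n, n = 0, 1, 2, ... *)
Definition path_vertex (p : nat) (f : nat -> 'I_p) (n : nat) : vertex p :=
  mkseq f n.

(* Condition (1): the (possibly
   infinite) sum of a along every infinite path from the root is >= w;
   since all terms are nonnegative this means some partial sum is >= w. *)
Definition integral_weight_function (p : nat) (a : vertex p -> nat) (w : nat)
  : Prop :=
  (forall f : nat -> 'I_p,
      exists N, w <= \sum_(n < N) a (path_vertex f n)) /\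
  (forall v : vertex p, \sum_(i : 'I_p) a (rcons v i) <= a v).

(* Partial scalar product over all vertices of depth < N; the scalar product
   <a,b> in [0,oo] is the supremum of these. *)
Definition scal_partial (p : nat) (a b : vertex p -> nat) (N : nat) : nat :=
  \sum_(n < N) \sum_(t : n.-tuple 'I_p) a (tval t) * b (tval t).

Definition integral_resolution (p w : nat) (g : nat -> nat) : Prop :=
  (forall i, p * g i.+1 <= g i) /\
  (exists N, forall M, N <= M -> \sum_(i < M) g i = w).

Definition lex_lt (g h : nat -> nat) : Prop :=
  exists k, (forall i, i < k -> g i = h i) /\ g k < h k.

(* g is the lexicographically smallest integral resolution of w,
   i.e. g = (gammahat_i(w))_i. *)
Definition lex_min_resolution (p w : nat) (g : nat -> nat) : Prop :=
  integral_resolution p w g /\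
  (forall h, integral_resolution p w h -> ~ lex_lt h g).

(* Main.v *)
Require Import Defs.
From mathcomp Require Import all_boot.
From mathcomp Require Import zify.
Set Implicit Arguments. Unset Strict Implicit. Unset Printing Implicit Defensive.

Fixpoint Ff (p n c : nat) : nat := if n is n'.+1 then c + Ff p n' (c %/ p) else 0.
Definition FF p c := Ff p c.+1 c.

Lemma Ff0c p n : Ff p n 0 = 0.
Proof. by elim: n => //= n IH; rewrite div0n IH. Qed.

Lemma Ff_mono p n c d : c <= d -> Ff p n c <= Ff p n d.
Proof.
elim: n c d => //= n IH c d cd; apply: leq_add => //; apply: IH; exact: leq_div2r.
Qed.

Lemma Ff_fuel p n c : Ff p n c <= Ff p n.+1 c.
Proof.
elim: n c => [|n IH] c /=; first by [].
by rewrite leq_add2l IH.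
Qed.

Lemma Ff_fuel_le p n m c : n <= m -> Ff p n c <= Ff p m c.
Proof.
move=> /subnK <-; elim: (m - n) => [|k IH]; first by [].
by rewrite addSn; apply: leq_trans IH (Ff_fuel _ _ _).
Qed.

Lemma div_lt p c : 2 <= p -> 0 < c -> c %/ p < c.
Proof. move=> hp hc; rewrite ltn_divLR; last lia. nia. Qed.

Lemma Ff_stab p n c k : 2 <= p -> c < n -> Ff p (n + k) c = Ff p n c.
Proof.
move=> hp; elim: n c => [|n IH] c //= hc.
case: c hc => [|c] hc.
  by rewrite div0n !Ff0c.
rewrite IH //.
have := div_lt hp (ltn0Sn c). lia.
Qed.

Lemma Ff_le_FF p n c : 2 <= p -> Ff p n c <= FF p c.
Proof.
move=> hp; rewrite /FF; case: (leqP n c.+1) => h; first exact: Ff_fuel_le.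
by rewrite -(subnK (ltnW h)) addnC Ff_stab.
Qed.

Lemma FF_rec p c : 2 <= p -> FF p c = c + FF p (c %/ p).
Proof.
move=> hp; rewrite /FF.
rewrite -(@Ff_stab p (c.+1) c 1 hp (ltnSn _)).
have -> : Ff p (c.+1 + 1) c = c + Ff p c.+1 (c %/ p) by rewrite addn1.
congr (_ + _).
case: c => [|c]; first by rewrite div0n !Ff0c.
have hl := div_lt hp (ltn0Sn c).
have e := @Ff_stab p (c.+1 %/ p).+1 (c.+1 %/ p) (c.+2 - (c.+1 %/ p).+1) hp (ltnSn _).
rewrite subnKC in e; [by [] | exact: ltnW].
Qed.

Lemma FF_ge p c : c <= FF p c.
Proof. by rewrite /FF /= leq_addr. Qed.

Lemma res_Ff p (h : nat -> nat) N : 2 <= p ->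
  (forall i, p * h i.+1 <= h i) -> \sum_(i < N) h i <= Ff p N (h 0).
Proof.
move=> hp; elim: N h => [|N IH] h hh; first by rewrite big_ord0.
rewrite big_ord_recl /=; apply: leq_add => //.
apply: leq_trans (IH (fun i => h i.+1) (fun i => hh i.+1)) _.
apply: Ff_mono. rewrite leq_divRL; last lia.
by rewrite mulnC.
Qed.

Lemma res_FF p (h : nat -> nat) N : 2 <= p ->
  (forall i, p * h i.+1 <= h i) -> \sum_(i < N) h i <= FF p (h 0).
Proof. move=> hp hh; exact: leq_trans (res_Ff N hp hh) (Ff_le_FF _ _ hp). Qed.

Lemma h0_ex p r : exists c, r <= FF p c.
Proof. by exists r; apply: FF_ge. Qed.

Definition h0 p r : nat := ex_minn (h0_ex p r).

Lemma h0_spec p r : r <= FF p (h0 p r).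
Proof. by rewrite /h0; case: ex_minnP. Qed.

Lemma h0_min p r c : r <= FF p c -> h0 p r <= c.
Proof. by rewrite /h0; case: ex_minnP => m _ H /H. Qed.

Lemma h0_le p r : h0 p r <= r.
Proof. exact/h0_min/FF_ge. Qed.

Lemma h0_pos p r : 0 < r -> 0 < h0 p r.
Proof.
move=> hr; have := h0_spec p r; case: (h0 p r) => // .
rewrite /FF; have -> : Ff p 1 0 = 0 by apply: Ff0c. lia.
Qed.

Lemma h0_step p r : 2 <= p -> p * h0 p (r - h0 p r) <= h0 p r.
Proof.
move=> hp; set c := h0 p r.
have h1 : h0 p (r - c) <= c %/ p.
  apply: h0_min; have := h0_spec p r; rewrite -/c (FF_rec _ hp); lia.
apply: leq_trans (leq_mul (leqnn p) h1) _.
by rewrite mulnC leq_divM.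
Qed.

Definition rem p z i := iter i (fun r => r - h0 p r) z.
Definition ghat p z i := h0 p (rem p z i).

Lemma remS p z i : rem p z i.+1 = rem p z i - ghat p z i.
Proof. by []. Qed.

Lemma ghat_shift p z i : ghat p z i.+1 = ghat p (z - h0 p z) i.
Proof. by rewrite /ghat /rem iterSr. Qed.

Lemma ghat_sum p z n : \sum_(i < n) ghat p z i + rem p z n = z.
Proof.
elim: n => [|n IH]; first by rewrite big_ord0.
rewrite remS big_ord_recr /=; move: IH.
have := h0_le p (rem p z n); rewrite /ghat => h1 h2. by rewrite -addnA subnKC.
Qed.

Lemma rem_le p z n : rem p z n <= z - n.
Proof.
elim: n => [|n IH]; first by rewrite subn0.
rewrite remS; case: (posnP (rem p z n)) => h.
  by rewrite h.
have := h0_pos p h; rewrite /ghat; lia.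
Qed.

Lemma ghat_res p z : 2 <= p -> integral_resolution p z (ghat p z).
Proof.
move=> hp; split.
  by move=> i; rewrite /ghat remS; apply: h0_step.
exists z => M hM; have := ghat_sum p z M; have := rem_le p z M; lia.
Qed.

Lemma res_shift p z h : integral_resolution p z h ->
  integral_resolution p (z - h 0) (fun i => h i.+1).
Proof.
case=> h1 [N hN]; split; first by move=> i; apply: h1.
exists N => M hM; have := hN M.+1 (leqW hM); rewrite big_ord_recl.
move=> <- /=; by rewrite addKn.
Qed.

Lemma res_FFz p z h : 2 <= p -> integral_resolution p z h -> z <= FF p (h 0).
Proof.
move=> hp [h1 [N hN]]; rewrite -(hN N (leqnn _)); exact: res_FF.
Qed.

Lemma ghat_lexmin p : 2 <= p -> forall k z h, integral_resolution p z h ->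
  (forall i, i < k -> h i = ghat p z i) -> ghat p z k <= h k.
Proof.
move=> hp; elim=> [|k IH] z h hr heq.
  exact/h0_min/(res_FFz hp hr).
rewrite ghat_shift.
have e0 : h 0 = h0 p z by rewrite (heq 0).
apply: (IH _ (fun i => h i.+1)).
  by rewrite -e0; apply: res_shift.
by move=> i hi; rewrite heq // ghat_shift.
Qed.

Lemma ghat_lm p z : 2 <= p -> lex_min_resolution p z (ghat p z).
Proof.
move=> hp; split; first exact: ghat_res.
move=> h hr [k [hk1 hk2]].
have := ghat_lexmin hp hr hk1; lia.
Qed.

Lemma sum_le_N (c : nat -> nat) N N' : N <= N' ->
  \sum_(i < N) c i <= \sum_(i < N') c i.
Proof. move=> h; rewrite -(subnKC h) big_split_ord /=; exact: leq_addr. Qed.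

Definition Rs p x (c : nat -> nat) : Prop :=
  (forall i, p * c i.+1 <= c i) /\ exists N, x <= \sum_(i < N) c i.

Lemma res_Rs p x g : integral_resolution p x g -> Rs p x g.
Proof. by case=> h1 [N hN]; split => //; exists N; rewrite hN. Qed.

Lemma lm_first p x g c : 2 <= p -> lex_min_resolution p x g -> Rs p x c ->
  g 0 <= c 0.
Proof.
move=> hp [hg hlm] [c1 [N hN]].
have hx : x <= FF p (c 0) := leq_trans hN (res_FF N hp c1).
have h0c := h0_min hx.
rewrite leqNgt; apply/negP => hlt.
apply: (hlm (ghat p x) (ghat_res x hp)).
by exists 0; split => //; rewrite /ghat /=; apply: leq_ltn_trans h0c hlt.
Qed.

Lemma lm_shift p x g : lex_min_resolution p x g ->
  lex_min_resolution p (x - g 0) (fun i => g i.+1).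
Proof.
move=> [hg hlm]; split; first exact: res_shift.
move=> h hh [k [hk1 hk2]].
have hx : g 0 <= x.
  case: hg => _ [N hN]; rewrite -(hN N.+1 (leqnSn _)) big_ord_recl; exact: leq_addr.
have h0g1 : h 0 <= g 1.
  by case: k hk1 hk2 => [|k] hk1 hk2; [exact: ltnW | rewrite hk1].
apply: (hlm (fun i => if i is i'.+1 then h i' else g 0)).
  case: hh => hh1 [N hN]; split.
    case=> [|i]; last exact: hh1.
    apply: leq_trans (leq_mul (leqnn p) h0g1) _; exact: hg.1.
  exists N.+1 => M hM; case: M hM => // M hM.
  by rewrite big_ord_recl /= hN // subnKC.
exists k.+1; split => //.
by case=> [|i] //= /hk1.
Qed.

Lemma lm_prefix p : 2 <= p -> forall j x c g, lex_min_resolution p x g -> Rs p x c ->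
  \sum_(i < j) g i <= \sum_(i < j) c i.
Proof.
move=> hp; elim=> [|j IH] x c g hg hc; first by rewrite !big_ord0.
have g0c := lm_first hp hg hc.
set c' := fun i => if i is i'.+1 then c i'.+2 else c 1 + (c 0 - g 0).
have hc' : Rs p (x - g 0) c'.
  case: hc => c1 [N hN]; split.
    case=> [|i] /=; last exact: c1.
    apply: leq_trans (c1 1) _; exact: leq_addr.
  exists N.+1.
  have e : \sum_(i < N.+1) c' i = (c 0 - g 0) + \sum_(i < N.+1) c i.+1.
    rewrite !big_ord_recl /= addnA [c 1 + _]addnC; done.
  rewrite e.
  have : x <= \sum_(i < N.+2) c i.
    apply: leq_trans hN _; apply: sum_le_N; exact: leqW.
  rewrite big_ord_recl /=.
  move=> hx; rewrite leq_subLR addnA subnKC //.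
have := IH _ _ _ (lm_shift hg) hc'.
have e : \sum_(i < j) c' i <= (c 0 - g 0) + \sum_(i < j) c i.+1.
  case: j {IH} => [|j]; first by rewrite !big_ord0.
  by rewrite !big_ord_recl /= addnA [c 1 + _]addnC.
rewrite !big_ord_recl /= => h1.
have h2 := leq_trans h1 e.
rewrite -(subnKC g0c) -addnA leq_add2l.
exact: h2.
Qed.

Lemma abel (D u : nat -> nat) K : (forall i, D i.+1 <= D i) ->
  \sum_(i < K) D i * u i =
  \sum_(j < K) (D j - D j.+1) * \sum_(i < j.+1) u i + D K * \sum_(i < K) u i.
Proof.
move=> hD; elim: K => [|K IH]; first by rewrite !big_ord0 muln0.
rewrite big_ord_recr /= IH [in RHS]big_ord_recr /= -!addnA; congr (_ + _).
rewrite [in RHS]big_ord_recr /=.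
rewrite -mulnDl subnK // -mulnDr //.
Qed.

Lemma lm_weighted p x g c (D : nat -> nat) : 2 <= p ->
  lex_min_resolution p x g -> Rs p x c -> (forall i, D i.+1 <= D i) ->
  forall K, \sum_(i < K) D i * g i <= \sum_(i < K) D i * c i.
Proof.
move=> hp hg hc hD K; rewrite !abel //.
apply: leq_add; last by apply: leq_mul => //; exact: lm_prefix hg hc.
apply: leq_sum => j _; apply: leq_mul => //; exact: lm_prefix hg hc.
Qed.


Definition amin p (hp0 : 0 < p) (a : vertex p -> nat) (u : vertex p) : 'I_p :=
  [arg min_(j < Ordinal hp0) a (rcons u j)].

Fixpoint gpath p (hp0 : 0 < p) (a : vertex p -> nat) (n : nat) : vertex p :=
  if n is n'.+1 then rcons (gpath hp0 a n') (amin hp0 a (gpath hp0 a n')) else [::].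

Lemma amin_le p (hp0 : 0 < p) a u j : a (rcons u (amin hp0 a u)) <= a (rcons u j).
Proof. rewrite /amin; case: arg_minnP => // i _ H; exact: H. Qed.

Lemma wf_root p (a : vertex p -> nat) x : 2 <= p -> integral_weight_function a x -> x <= FF p (a [::]).
Proof.
move=> hp [h1 h2].
have hp0 : 0 < p by lia.
set f := fun n => amin hp0 a (gpath hp0 a n).
have hpath : forall n, path_vertex f n = gpath hp0 a n.
  elim=> [|n IH] //; by rewrite /path_vertex mkseqS -/(path_vertex f n) IH.
have [N hN] := h1 f.
have hdec : forall n, p * a (gpath hp0 a n.+1) <= a (gpath hp0 a n).
  move=> n /=; apply: leq_trans (h2 (gpath hp0 a n)).
  have -> : p * a (rcons (gpath hp0 a n) (amin hp0 a (gpath hp0 a n))) =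
    \sum_(j : 'I_p) a (rcons (gpath hp0 a n) (amin hp0 a (gpath hp0 a n))).
    by rewrite sum_nat_const card_ord.
  apply: leq_sum => j _; exact: amin_le.
apply: leq_trans hN _.
under eq_bigr => i _ do rewrite hpath.
exact: (res_FF N hp (fun n => hdec n)).
Qed.

Lemma wf_sub p (a : vertex p -> nat) x (j : 'I_p) : integral_weight_function a x ->
  integral_weight_function (fun v => a (j :: v)) (x - a [::]).
Proof.
move=> [h1 h2]; split; last by move=> v; exact: (h2 (j :: v)).
move=> f.
have [N hN] := h1 (fun n => if n is n'.+1 then f n' else j).
case: N hN => [|N] hN.
  by exists 0; move: hN; rewrite big_ord0; lia.
exists N; move: hN; rewrite big_ord_recl /=.
have -> : \sum_(i < N) a (path_vertex (fun n => if n is n'.+1 then f n' else j) (bump 0 i))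
   = \sum_(i < N) a (j :: path_vertex f i).
  apply: eq_bigr => i _; congr (a _).
  rewrite /path_vertex /mkseq /bump /=.
  by rewrite add0n -[1]addn0 iotaDl -map_comp.
rewrite {1}/path_vertex. have -> : mkseq (fun n => if n is n'.+1 then f n' else j) 0 = [::] by []. by rewrite leq_subLR.
Qed.

Lemma tuple_sum p n (F : seq 'I_p -> nat) :
  \sum_(t : n.+1.-tuple 'I_p) F (tval t) =
  \sum_(j : 'I_p) \sum_(t : n.-tuple 'I_p) F (j :: tval t).
Proof.
rewrite pair_big /=.
rewrite (reindex (fun u : 'I_p * n.-tuple 'I_p => [tuple of u.1 :: u.2])) /=.
  by apply: eq_bigr.
exists (fun t : n.+1.-tuple 'I_p => (thead t, [tuple of behead t])).
  by move=> [x t] _ /=; rewrite theadE; congr (_, _); apply: val_inj.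
by move=> t _ /=; rewrite [RHS]tuple_eta.
Qed.

Lemma scal_S p (a b : vertex p -> nat) N :
  scal_partial a b N.+1 = a [::] * b [::] +
    \sum_(j : 'I_p) scal_partial (fun v => a (j :: v)) (fun v => b (j :: v)) N.
Proof.
rewrite /scal_partial big_ord_recl /=; congr (_ + _).
  rewrite (eq_bigr (fun _ => a [::] * b [::])); last first.
    by move=> t _; rewrite (tuple0 t).
  by rewrite sum_nat_const card_tuple expn0 mul1n.
rewrite exchange_big /=; apply: eq_bigr => i _.
exact: (@tuple_sum p i (fun s => a s * b s)).
Qed.

Lemma scal_mono p (a b : vertex p -> nat) N N' : N <= N' ->
  scal_partial a b N <= scal_partial a b N'.
Proof. exact: (@sum_le_N (fun n => \sum_(t : n.-tuple 'I_p) a t * b t)). Qed.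

Lemma fin_bound (I : eqType) (P : I -> nat -> Prop) (s : seq I) :
  (forall j N N', N <= N' -> P j N -> P j N') ->
  (forall j, j \in s -> exists N, P j N) -> exists N, forall j, j \in s -> P j N.
Proof.
move=> hm; elim: s => [|x s IH] hs; first by exists 0.
have [N1 h1] := hs x (mem_head _ _).
have [N2 h2] : exists N, forall j, j \in s -> P j N.
  by apply: IH => j hj; apply: hs; rewrite in_cons hj orbT.
exists (maxn N1 N2) => j; rewrite in_cons => /orP [/eqP -> | hj].
  by apply: hm h1; exact: leq_maxl.
by apply: hm (h2 _ hj); exact: leq_maxr.
Qed.

Lemma cons_R p (a : vertex p -> nat) x : 2 <= p -> integral_weight_function a x ->
  Rs p x (fun i => if i is i'.+1 then ghat p (x - a [::]) i' else a [::]).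
Proof.
move=> hp ha; have hx := wf_root hp ha.
have hr := ghat_res (x - a [::]) hp.
split.
  case=> [|i]; last exact: hr.1.
  rewrite /ghat /rem /=.
  have h1 : h0 p (x - a [::]) <= a [::] %/ p.
    apply: h0_min; move: hx; rewrite (FF_rec _ hp); lia.
  apply: leq_trans (leq_mul (leqnn p) h1) _.
  by rewrite mulnC leq_divM.
case: hr => _ [N hN]; exists N.+1; rewrite big_ord_recl /= hN //; lia.
Qed.

Lemma weight_dec p (v : nat -> nat) : (forall i, p * v i.+1 <= v i) ->
  forall i, p ^ i.+1 * v i.+1 <= p ^ i * v i.
Proof. by move=> hv i; rewrite expnS -mulnA mulnCA leq_mul2l hv orbT. Qed.

Lemma tree_bound p : 2 <= p -> forall M x y (a b : vertex p -> nat) g h,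
  integral_weight_function a x -> integral_weight_function b y ->
  lex_min_resolution p x g -> lex_min_resolution p y h ->
  exists N, \sum_(i < M) p ^ i * g i * h i <= scal_partial a b N.
Proof.
move=> hp; elim=> [|M IH] x y a b g h ha hb hg hh.
  by exists 0; rewrite big_ord0.
set g' := ghat p (x - a [::]); set h' := ghat p (y - b [::]).
set Phi := \sum_(i < M) p ^ i * g' i * h' i.
have [N hN] := @fin_bound _
  (fun j N => Phi <= scal_partial (fun v => a (j :: v)) (fun v => b (j :: v)) N)
  (enum 'I_p) (fun j N N' hNN' H => leq_trans H (scal_mono _ _ hNN'))
  (fun j _ => IH _ _ _ _ _ _ (wf_sub j ha) (wf_sub j hb) (ghat_lm _ hp) (ghat_lm _ hp)).
exists N.+1; rewrite scal_S.
set c := fun i => if i is i'.+1 then g' i' else a [::].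
set d := fun i => if i is i'.+1 then h' i' else b [::].
have cR : Rs p x c := cons_R hp ha.
have dR : Rs p y d := cons_R hp hb.
have e : \sum_(i < M.+1) p ^ i * c i * d i = a [::] * b [::] + p * Phi.
  rewrite big_ord_recl /= expn0 mul1n big_distrr; congr (_ + _).
  by apply: eq_bigr => i _; rewrite /= expnS -!mulnA.
have step : \sum_(i < M.+1) p ^ i * c i * d i <=
    a [::] * b [::] + \sum_(j : 'I_p) scal_partial (fun v => a (j :: v)) (fun v => b (j :: v)) N.
  rewrite e leq_add2l.
  have -> : p * Phi = \sum_(j : 'I_p) Phi by rewrite sum_nat_const card_ord.
  by apply: leq_sum => j _; apply: hN; rewrite mem_enum.
apply: leq_trans step.
have hgc : \sum_(i < M.+1) p ^ i * g i * h i <= \sum_(i < M.+1) p ^ i * c i * h i.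
  rewrite (eq_bigr (fun i : 'I_M.+1 => (p ^ i * h i) * g i)); last by move=> i _; rewrite mulnAC.
  rewrite [X in _ <= X](eq_bigr (fun i : 'I_M.+1 => (p ^ i * h i) * c i)); last by move=> i _; rewrite mulnAC.
  apply: (lm_weighted (D := fun i => p ^ i * h i)) hp hg cR _ _.
  apply: weight_dec; exact: hh.1.1.
apply: leq_trans hgc _.
rewrite (eq_bigr (fun i : 'I_M.+1 => (p ^ i * c i) * h i)) //.
rewrite [X in _ <= X](eq_bigr (fun i : 'I_M.+1 => (p ^ i * c i) * d i)) //.
apply: (lm_weighted (D := fun i => p ^ i * c i)) hp hh dR _ _.
apply: weight_dec; exact: cR.1.
Qed.

Theorem mainTheorem5 (p : nat) (hp : 2 <= p)
  (a b : vertex p -> nat) (wa wb : nat)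
  (ha : integral_weight_function a wa) (hb : integral_weight_function b wb)
  (ga gb : nat -> nat)
  (hga : lex_min_resolution p wa ga) (hgb : lex_min_resolution p wb gb) :
  forall M : nat, exists N : nat,
    \sum_(i < M) p ^ i * ga i * gb i <= scal_partial a b N.
Proof. move=> M; exact: (tree_bound hp M ha hb hga hgb). Qed.
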